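(* Let $(a_k)_{k\geqslant1}$ be a sequence of complex numbers such that \[ A(n)=\sum_{k\leqslant n}a_k\left[\frac{n}{k}\right]=Cn+o(n)\quad\text{as } n\to\infty \] for some constant $C\in\mathbb{C}$. Then \[ S(n)=\sum_{k\leqslant n}a_k\left[\frac{n}{k}\right]\log k=o(n\log n)\quad\text{as } n\to\infty. \]
   Context: $[x]$ denotes the integer part of a real number $x$. *)

(* Defs.v *)
From Stdlib Require Import Reals Lra Lia Arith.
From Coquelicot Require Import Coquelicot.
Open Scope R_scope.

Definition Asum (a : nat -> C) (n : nat) : C :=
  sum_n_m (fun k => Cmult (a k) (RtoC (INR (Nat.div n k)))) 1 n.

Definition Ssum (a : nat -> C) (n : nat) : C :=
  sum_n_m (fun k => Cmult (a k) (RtoC (INR (Nat.div n k) * ln (INR k)))) 1 n.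

(* Main.v *)
Require Import Defs.
From Stdlib Require Import Reals Lra Lia.
From Coquelicot Require Import Coquelicot.
From mathcomp Require Import all_boot.
From HB Require Import structures.
From mathcomp Require Import zify.
Open Scope R_scope.

Lemma RplusA' : associative Rplus. Proof. move=> x y z; lra. Qed.
Lemma Rplus0' : left_id 0 Rplus. Proof. move=> x; lra. Qed.
HB.instance Definition _ := Monoid.isComLaw.Build R 0 Rplus RplusA' Rplus_comm Rplus0'.

Section S.
Context {I : Type} (r : seq I) (P : pred I).

Lemma sumR_scale c (F : I -> R) :
  c * \big[Rplus/0]_(i <- r | P i) F i = \big[Rplus/0]_(i <- r | P i) (c * F i).
Proof.
elim/big_rec2: _ => [|i y1 y2 _ <-]; lra.
Qed.

Lemma sumR_le (F G : I -> R) : (forall i, P i -> F i <= G i) ->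
  \big[Rplus/0]_(i <- r | P i) F i <= \big[Rplus/0]_(i <- r | P i) G i.
Proof.
move=> H; elim/big_ind2: _ => //; [lra| move=> x1 x2 y1 y2; lra].
Qed.

Lemma sumR_ge0 (F : I -> R) : (forall i, P i -> 0 <= F i) ->
  0 <= \big[Rplus/0]_(i <- r | P i) F i.
Proof.
move=> H; elim/big_ind: _ => //; [lra| move=> x y; lra].
Qed.

Lemma sumR_abs (F : I -> R) :
  Rabs (\big[Rplus/0]_(i <- r | P i) F i) <= \big[Rplus/0]_(i <- r | P i) Rabs (F i).
Proof.
elim/big_rec2: _ => [|i y1 y2 _ H]; first by rewrite Rabs_R0; lra.
by apply: Rle_trans (Rabs_triang _ _) _; lra.
Qed.

Lemma sumR_sub (F G : I -> R) :
  \big[Rplus/0]_(i <- r | P i) (F i - G i) =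
  \big[Rplus/0]_(i <- r | P i) F i - \big[Rplus/0]_(i <- r | P i) G i.
Proof.
elim/big_rec3: _ => [|i y1 y2 y3 _ ->]; lra.
Qed.

Lemma sumR_add (F G : I -> R) :
  \big[Rplus/0]_(i <- r | P i) (F i + G i) =
  \big[Rplus/0]_(i <- r | P i) F i + \big[Rplus/0]_(i <- r | P i) G i.
Proof. exact: big_split. Qed.
End S.

Lemma sumR_recr m n (F : nat -> R) : (m <= n)%N ->
  \big[Rplus/0]_(m <= i < n.+1) F i = \big[Rplus/0]_(m <= i < n) F i + F n.
Proof. exact: big_nat_recr. Qed.

Lemma sumR_recl m n (F : nat -> R) : (m <= n)%N ->
  \big[Rplus/0]_(m <= i < n.+1) F i = F m + \big[Rplus/0]_(m <= i < n) F i.+1.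
Proof. exact: big_nat_recl. Qed.

Lemma sumR_cat m n p (P : pred nat) (F : nat -> R) : (m <= n)%N -> (n <= p)%N ->
  \big[Rplus/0]_(m <= i < p | P i) F i =
  \big[Rplus/0]_(m <= i < n | P i) F i + \big[Rplus/0]_(n <= i < p | P i) F i.
Proof. exact: big_cat_nat. Qed.

Lemma sumR_eq0 {I : Type} (r : seq I) (P : pred I) (F : I -> R) :
  (forall i, P i -> F i = 0) -> \big[Rplus/0]_(i <- r | P i) F i = 0.
Proof. by move=> H; rewrite big1. Qed.

Lemma natdivE n k : Nat.div n k = n %/ k.
Proof.
case: k => [|k]; first by rewrite divn0.
symmetry; apply: (Nat.div_unique _ _ _ (n %% k.+1)).
  by apply/ltP; rewrite ltn_mod.
by rewrite {1}(divn_eq n k.+1) mulnC.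
Qed.

Lemma sum_cut (w : nat -> R) k m N : (0 < k)%N ->
  \big[Rplus/0]_(1 <= j < N.+1) (if (j * k <= m)%N then w j else 0) =
  \big[Rplus/0]_(1 <= j < (minn N (m %/ k)).+1) w j.
Proof.
move=> k0; elim: N => [|N IH].
  by rewrite !big_geq // minnC minn0.
rewrite sumR_recr //= IH -leq_divRL //.
case: (leqP N.+1 (m %/ k)) => h.
  have -> : minn N (m %/ k) = N by apply/minn_idPl; apply: ltnW.
  by rewrite ?(minn_idPl h) [in RHS]sumR_recr.
have -> : minn N (m %/ k) = m %/ k by apply/minn_idPr; rewrite -ltnS.
by rewrite ?(minn_idPr (ltnW h)) Rplus_0_r.
Qed.

Lemma sum_one M : \big[Rplus/0]_(1 <= j < M.+1) 1 = INR M.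
Proof.
elim: M => [|M IH]; first by rewrite big_geq.
by rewrite sumR_recr // IH S_INR.
Qed.

Lemma INR_fact_pos M : 0 < INR M`!.
Proof. apply: lt_0_INR; apply/ltP; exact: fact_gt0. Qed.

Lemma sum_ln M : \big[Rplus/0]_(1 <= j < M.+1) ln (INR j) = ln (INR M`!).
Proof.
elim: M => [|M IH]; first by rewrite big_geq // /= ln_1.
rewrite sumR_recr // IH factS mult_INR ln_mult; last exact: INR_fact_pos.
  lra.
by apply: lt_0_INR; lia.
Qed.

Lemma INR_sum {I : Type} (r : seq I) (P : pred I) (F : I -> nat) :
  INR (\sum_(i <- r | P i) F i) = \big[Rplus/0]_(i <- r | P i) INR (F i).
Proof.
elim/big_rec2: _ => [|i y1 y2 _ <-] //.
by rewrite plus_INR.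
Qed.

Lemma ln_prod {I : Type} (r : seq I) (P : pred I) (F : I -> nat) :
  (forall i, P i -> (0 < F i)%N) ->
  ln (INR (\prod_(i <- r | P i) F i)) = \big[Rplus/0]_(i <- r | P i) ln (INR (F i)).
Proof.
move=> H.
have : (0 < \prod_(i <- r | P i) F i)%N /\
       ln (INR (\prod_(i <- r | P i) F i)) = \big[Rplus/0]_(i <- r | P i) ln (INR (F i)).
  elim/big_rec2: _ => [|i y1 y2 Pi [y0 <-]]; first by split => //; rewrite /= ln_1.
  have Fi := H i Pi.
  split; first by rewrite muln_gt0 Fi.
  rewrite mult_INR ln_mult //; apply: lt_0_INR; exact/ltP.
by case.
Qed.

Lemma INR_expn p e : INR (p ^ e)%N = INR p ^ e.
Proof. elim: e => [|e IH]; first by rewrite expn0.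
by rewrite expnS mult_INR IH. Qed.

Lemma logn_np p n : ~~ prime p -> logn p n = 0%N.
Proof. by move=> np; rewrite lognE (negbTE np). Qed.

Lemma logn_big p n : (0 < n)%N -> (n < p)%N -> logn p n = 0%N.
Proof.
move=> n0 np; rewrite lognE n0 /=.
case: (boolP (p %| n)) => d; last by rewrite andbF.
by have := dvdn_leq n0 d; rewrite leqNgt np.
Qed.


Lemma ln_fact_dec n P : (0 < n)%N -> (n <= P)%N ->
  ln (INR n) = \big[Rplus/0]_(0 <= p < P.+1 | prime p) (ln (INR p) * INR (logn p n)).
Proof.
move=> n0 nP.
rewrite -{1}(partnT n0) /partn ln_prod; last first.
  move=> p _; rewrite expn_gt0; case: (posnP p) => [->|//].
  by rewrite logn_np.
rewrite [RHS]big_mkcond /= (@sumR_cat 0 n.+1 P.+1) //=.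
rewrite [X in _ = _ + X]big_nat_cond [X in _ = _ + X]big1; last first.
  move=> p /andP [/andP [h1 h2] _]; case: ifP => // _.
  by rewrite logn_big // INR_0 Rmult_0_r.
rewrite Rplus_0_r.
apply: eq_bigr => p _.
case: (boolP (prime p)) => pp.
  rewrite INR_expn ln_pow //; last by apply: lt_0_INR; apply/ltP; exact: prime_gt0.
  by rewrite Rmult_comm.
by rewrite logn_np // expn0 ln_1.
Qed.

Lemma ln_fact_logn m P : (m <= P)%N ->
  ln (INR m`!) = \big[Rplus/0]_(0 <= p < P.+1 | prime p) (ln (INR p) * INR (logn p m`!)).
Proof.
elim: m => [|m IH] mP.
  rewrite fact0 ln_1 sumR_eq0 // => p _; by rewrite logn1 Rmult_0_r.
rewrite factS mult_INR ln_mult; last exact: INR_fact_pos; last by apply: lt_0_INR; lia.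
rewrite (@ln_fact_dec m.+1 P) // IH; last exact: ltnW.
rewrite -sumR_add; apply: eq_bigr => p pp.
rewrite lognM // ?fact_gt0 // plus_INR; lra.
Qed.

Lemma ln_fact_legendre m P T : (m <= P)%N -> (m <= T)%N ->
  ln (INR m`!) = \big[Rplus/0]_(0 <= p < P.+1 | prime p)
                   \big[Rplus/0]_(1 <= t < T.+1) (ln (INR p) * INR (m %/ p ^ t)).
Proof.
move=> mP mT; rewrite (@ln_fact_logn m P mP); apply: eq_bigr => p pp.
rewrite logn_fact // INR_sum sumR_scale (@sumR_cat 1 m.+1 T.+1) //.
rewrite [X in _ = _ + X]big_nat_cond [X in _ = _ + X]big1 ?Rplus_0_r //.
move=> t /andP [/andP [h1 h2] _].
rewrite divn_small ?Rmult_0_r //.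
have := @ltn_expl p t (prime_gt1 pp); lia.
Qed.

Lemma ln_le_sub1 y : 0 < y -> ln y <= y - 1.
Proof. move=> y0; have := exp_ineq1_le (ln y); rewrite exp_ln //; lra. Qed.

Lemma ln2_lt1 : ln 2 < 1.
Proof.
rewrite -[X in _ < X](ln_exp 1); apply: ln_increasing; first lra.
have := exp_ineq1 1; lra.
Qed.

Lemma fact_double m : ((2 * m)`! <= 4 ^ m * m`! * m`!)%N.
Proof.
elim: m => [|m IH] //.
have -> : (2 * m.+1 = (2 * m).+2)%N by lia.
rewrite !factS expnS.
move: IH; move: (4 ^ m)%N (m`!) ((2 * m)`!) => X f F IH.
have h1 : ((2 * m).+2 * (2 * m).+1 <= 4 * m.+1 * m.+1)%N by nia.
have := leq_mul h1 IH.
move=> h2; nia.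
Qed.

Lemma fact_half_nat n m : n = (2 * m)%N \/ n = (2 * m).+1 ->
  (n`! <= n.+1 * 4 ^ m * m`! * m`!)%N.
Proof.
have := fact_double m.
move: (4 ^ m)%N (m`!) => X f h [->|->].
  move: h; move: ((2 * m)`!) => F h; nia.
rewrite factS; move: h; move: ((2 * m)`!) => F h; nia.
Qed.

Lemma ln_fact_half n : ln (INR n`!) <= 2 * ln (INR (n %/ 2)`!) + 2 * INR n.
Proof.
set m := (n %/ 2)%N.
have hn : n = (2 * m)%N \/ n = (2 * m).+1 by rewrite /m; lia.
have hm : (2 * m <= n)%N by rewrite /m; lia.
have h := @fact_half_nat n m hn.
have hf := INR_fact_pos m.
have h4 : 0 < INR (4 ^ m) by apply: lt_0_INR; apply/ltP; rewrite expn_gt0.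
have hn1 : 0 < INR n.+1 by apply: lt_0_INR; lia.
have : ln (INR n`!) <= ln (INR (n.+1 * 4 ^ m * m`! * m`!)).
  apply: ln_le; first exact: INR_fact_pos.
  exact: le_INR (leP h).
rewrite !mult_INR !ln_mult //; try by apply: Rmult_lt_0_compat => //; apply: Rmult_lt_0_compat.
rewrite INR_expn ln_pow; last by apply: lt_0_INR; lia.
have -> : ln (INR 4) = 2 * ln 2.
  have -> : INR 4 = 2 * 2 by simpl; lra.
  rewrite ln_mult; lra.
have l1 := ln_le_sub1 _ hn1.
have l2 := ln2_lt1.
have l3 : 0 < ln 2 by rewrite -ln_1; apply: ln_increasing; lra.
have l4 : INR (2 * m) <= INR n by apply: le_INR; apply/leP.
have e1 := S_INR n; rewrite mult_INR (_ : INR 2 = 2) in l4; last by simpl; lra.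
have : INR m * (2 * ln 2) <= INR n * ln 2 by nra.
have : INR n * ln 2 <= INR n by have := pos_INR n; nra.
move=> *; lra.
Qed.

Definition ind (b : bool) : R := if b then 1 else 0.

Lemma ind_ineq u : ind (0 < u)%N - ind (0 < u %/ 2)%N <= INR u - 2 * INR (u %/ 2).
Proof.
have h : (2 * (u %/ 2) <= u)%N by lia.
have h' : 2 * INR (u %/ 2) <= INR u.
  by have := le_INR _ _ (leP h); rewrite mult_INR (_ : INR 2 = 2) //; simpl; lra.
rewrite /ind; case: (posnP u) => [->|u0] /=.
  lra.
case: (posnP (u %/ 2)) => [->|v0] /=.
  have := le_INR _ _ (leP u0); rewrite /=; lra.
lra.
Qed.

Definition psi (R0 n : nat) : R :=
  \big[Rplus/0]_(0 <= p < R0.+1 | prime p)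
     \big[Rplus/0]_(1 <= t < R0.+1) (ln (INR p) * ind (0 < n %/ p ^ t)%N).

Lemma ln_prime_ge0 p : prime p -> 0 <= ln (INR p).
Proof.
move=> pp; rewrite -ln_1; apply: ln_le; first lra.
have := le_INR _ _ (leP (prime_gt0 pp)); rewrite /=; lra.
Qed.

Lemma psi_step R0 n : (n <= R0)%N -> psi R0 n <= psi R0 (n %/ 2) + 2 * INR n.
Proof.
move=> nR.
have L1 := @ln_fact_legendre n R0 R0 nR nR.
have nR' : (n %/ 2 <= R0)%N by apply: leq_trans (leq_div _ _) nR.
have L2 := @ln_fact_legendre (n %/ 2) R0 R0 nR' nR'.
have H := ln_fact_half n.
suff : psi R0 n - psi R0 (n %/ 2) - (ln (INR n`!) - 2 * ln (INR (n %/ 2)`!)) <= 0 by lra.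
rewrite /psi L1 L2 sumR_scale -!sumR_sub.
rewrite -[X in _ <= X](@sumR_eq0 _ (index_iota 0 R0.+1) (fun p => prime p) (fun _ => 0)) //.
apply: sumR_le => p pp.
rewrite sumR_scale -!sumR_sub.
rewrite -[X in _ <= X](@sumR_eq0 _ (index_iota 1 R0.+1) (fun _ => true) (fun _ => 0)) //.
apply: sumR_le => t _.
rewrite divnAC.
have := ind_ineq (n %/ p ^ t).
have := ln_prime_ge0 _ pp.
move: (ln (INR p)) => l; nra.
Qed.

Lemma psi_bound n R0 : (n <= R0)%N -> psi R0 n <= 4 * INR n.
Proof.
elim/ltn_ind: n => n IH nR.
case: (posnP n) => [->|n0].
  rewrite /psi sumR_eq0 /=; first lra.
  move=> p _; apply: sumR_eq0 => t _; by rewrite div0n /ind /= Rmult_0_r.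
have h1 : (n %/ 2 < n)%N by lia.
have h2 : (n %/ 2 <= R0)%N by lia.
have := IH _ h1 h2.
have := @psi_step R0 n nR.
have : 2 * INR (n %/ 2) <= INR n.
  have h : (2 * (n %/ 2) <= n)%N by lia.
  by have := le_INR _ _ (leP h); rewrite mult_INR (_ : INR 2 = 2) //; simpl; lra.
lra.
Qed.

Definition Ar (a : nat -> R) (R0 m : nat) : R :=
  \big[Rplus/0]_(1 <= k < R0.+1) (a k * INR (m %/ k)).
Definition Sr (a : nat -> R) (n : nat) : R :=
  \big[Rplus/0]_(1 <= k < n.+1) (a k * (INR (n %/ k) * ln (INR k))).
Definition dl (i : nat) : R := ln (INR i.+1) - ln (INR i).

Lemma sum_cut' (w : nat -> R) k m N : (0 < k)%N -> (m <= N)%N ->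
  \big[Rplus/0]_(1 <= j < N.+1) (ind (j * k <= m)%N * w j) =
  \big[Rplus/0]_(1 <= j < (m %/ k).+1) w j.
Proof.
move=> k0 mN.
have -> : (m %/ k)%N = minn N (m %/ k).
  by apply/esym/minn_idPr; apply: leq_trans (leq_div _ _) mN.
rewrite -sum_cut //; apply: eq_bigr => j _; rewrite /ind; case: ifP => _; lra.
Qed.

Lemma sum_ind k m N : (0 < k)%N -> (m <= N)%N ->
  \big[Rplus/0]_(1 <= j < N.+1) ind (j * k <= m)%N = INR (m %/ k).
Proof.
move=> k0 mN; rewrite -sum_one -(@sum_cut' (fun _ => 1) k m N) //.
apply: eq_bigr => j _; lra.
Qed.

Lemma tele x n : (1 <= x)%N -> (x <= n)%N ->
  \big[Rplus/0]_(1 <= i < n) (ind (x <= i)%N * dl i) = ln (INR n) - ln (INR x).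
Proof.
move=> x1; elim: n => [|n IH] xn; first by lia.
case: (posnP n) => [n0|n0].
  subst n; have -> : x = 1%N by lia.
  rewrite big_geq //; lra.
rewrite sumR_recr //.
case: (leqP x n) => h.
  rewrite IH //; change (ind true) with 1; rewrite /dl; lra.
have -> : x = n.+1 by lia.
rewrite (@eq_big_nat _ _ _ 1 n _ (fun _ => 0)); last first.
  move=> i /andP [_ hi]; rewrite /ind.
  have -> : (n.+1 <= i)%N = false by lia.
  lra.
rewrite sumR_eq0 //; change (ind false) with 0; lra.
Qed.

Lemma term_id (a : R) j k n : (1 <= j)%N -> (1 <= k)%N ->
  a * (ind (j * k <= n)%N * ln (INR k)) =
  a * ind (j * k <= n)%N * ln (INR n)
  - \big[Rplus/0]_(1 <= i < n) (dl i * (a * ind (j * k <= i)%N))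
  - a * (ind (j * k <= n)%N * ln (INR j)).
Proof.
move=> j1 k1.
have e : \big[Rplus/0]_(1 <= i < n) (dl i * (a * ind (j * k <= i)%N)) =
         a * \big[Rplus/0]_(1 <= i < n) (ind (j * k <= i)%N * dl i).
  by rewrite sumR_scale; apply: eq_bigr => i _; ring.
rewrite e; case: (leqP (j * k) n) => h.
  rewrite tele //; last by lia.
  rewrite mult_INR ln_mult; last (by apply: lt_0_INR; lia); last (by apply: lt_0_INR; lia).
  rewrite /ind; ring.
rewrite (@eq_big_nat _ _ _ 1 n _ (fun _ => 0)); last first.
  move=> i /andP [_ hi]; rewrite /ind.
  have -> : (j * k <= i)%N = false by lia.
  lra.
rewrite sumR_eq0 //; change (ind false) with 0; ring.
Qed.

Lemma P1 (a : nat -> R) n :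
  \big[Rplus/0]_(1 <= k < n.+1) \big[Rplus/0]_(1 <= j < n.+1)
     (a k * ind (j * k <= n)%N * ln (INR n)) = ln (INR n) * Ar a n n.
Proof.
rewrite /Ar sumR_scale; apply: eq_big_nat => k /andP [k1 _].
rewrite -(@sum_ind k n n) // !sumR_scale; apply: eq_bigr => j _; ring.
Qed.

Lemma P2 (a : nat -> R) n :
  \big[Rplus/0]_(1 <= k < n.+1) \big[Rplus/0]_(1 <= j < n.+1)
    \big[Rplus/0]_(1 <= i < n) (dl i * (a k * ind (j * k <= i)%N)) =
  \big[Rplus/0]_(1 <= i < n) (dl i * Ar a n i).
Proof.
under eq_bigr do rewrite (exchange_big_nat _ 1 n.+1 1 n).
rewrite (exchange_big_nat _ 1 n.+1 1 n).
apply: eq_big_nat => i /andP [i1 ilt].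
rewrite /Ar sumR_scale; apply: eq_big_nat => k /andP [k1 _].
rewrite -(@sum_ind k i n) //; last exact: ltnW.
rewrite !sumR_scale; apply: eq_bigr => j _; ring.
Qed.

Lemma P3 (a : nat -> R) n :
  \big[Rplus/0]_(1 <= k < n.+1) \big[Rplus/0]_(1 <= j < n.+1)
     (a k * (ind (j * k <= n)%N * ln (INR j))) =
  \big[Rplus/0]_(0 <= p < n.+1 | prime p) \big[Rplus/0]_(1 <= t < n.+1)
     (ln (INR p) * Ar a n (n %/ p ^ t)).
Proof.
rewrite (@eq_big_nat _ _ _ 1 n.+1 _ (fun k =>
   \big[Rplus/0]_(0 <= p < n.+1 | prime p) \big[Rplus/0]_(1 <= t < n.+1)
     (ln (INR p) * (a k * INR ((n %/ p ^ t) %/ k))))); last first.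
  move=> k /andP [k1 _].
  rewrite -sumR_scale (@sum_cut' (fun j => ln (INR j)) k n n) // sum_ln.
  have hk : (n %/ k <= n)%N by apply: leq_div.
  rewrite (@ln_fact_legendre (n %/ k) n n hk hk) sumR_scale.
  apply: eq_bigr => p _; rewrite sumR_scale; apply: eq_bigr => t _.
  rewrite divnAC; ring.
rewrite (exchange_big_nat _ 1 n.+1 0 n.+1).
apply: eq_bigr => p _.
rewrite (exchange_big_nat _ 1 n.+1 1 n.+1).
apply: eq_bigr => t _.
by rewrite /Ar sumR_scale.
Qed.

Lemma identity (a : nat -> R) n :
  Sr a n = ln (INR n) * Ar a n n
           - \big[Rplus/0]_(1 <= i < n) (dl i * Ar a n i)
           - \big[Rplus/0]_(0 <= p < n.+1 | prime p) \big[Rplus/0]_(1 <= t < n.+1)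
               (ln (INR p) * Ar a n (n %/ p ^ t)).
Proof.
rewrite -P1 -P2 -P3 -!sumR_sub /Sr.
apply: eq_big_nat => k /andP [k1 _].
rewrite -!sumR_sub -(@sum_ind k n n) // [_ * ln (INR k)]Rmult_comm sumR_scale sumR_scale.
apply: eq_big_nat => j /andP [j1 _].
rewrite -term_id //; ring.
Qed.

Lemma Ar_ext a R0 m : (m <= R0)%N -> Ar a R0 m = Ar a m m.
Proof.
move=> mR; rewrite /Ar (@sumR_cat 1 m.+1 R0.+1) //.
rewrite [X in _ + X = _]big_nat_cond [X in _ + X = _]big1 ?Rplus_0_r //.
move=> k /andP [/andP [h1 _] _]; rewrite divn_small //; rewrite /=; ring.
Qed.

Lemma Ar_shift a c n m : (1 <= n)%N -> (m <= n)%N ->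
  Ar (fun k => a k - (if k == 1%N then c else 0)) n m = Ar a m m - c * INR m.
Proof.
move=> n1 mn; rewrite -(@Ar_ext a n m) // /Ar.
rewrite (@eq_bigr _ _ _ _ _ _ _ (fun k => a k * INR (m %/ k) -
   (if k == 1%N then c else 0) * INR (m %/ k))); last by move=> k _; ring.
rewrite sumR_sub; congr (_ - _).
case: n n1 mn => [//|n] _ _.
rewrite sumR_recl // divn1 /= big_nat_cond (@sumR_eq0 _ _ _ (fun i => _)); first ring.
move=> i /andP [/andP [i1 _] _]; have -> : (i.+1 == 1%N) = false by lia.
ring.
Qed.

Lemma Sr_shift a c n :
  Sr (fun k => a k - (if k == 1%N then c else 0)) n = Sr a n.
Proof.
apply: eq_bigr => k _; case: eqP => [->|_]; last ring.
by rewrite /= ln_1; ring.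
Qed.

Lemma dl_ge0 i : (1 <= i)%N -> 0 <= dl i.
Proof.
move=> i1; rewrite /dl S_INR.
have h : 1 <= INR i by exact: (le_INR _ _ (leP i1)).
have : ln (INR i) <= ln (INR i + 1) by apply: ln_le; lra.
lra.
Qed.

Lemma sum_dl n : (1 <= n)%N -> \big[Rplus/0]_(1 <= i < n) dl i = ln (INR n).
Proof.
move=> n1; have := @tele 1 n (leqnn 1) n1.
rewrite (_ : INR 1 = 1) // ln_1 Rminus_0_r => <-.
apply: eq_big_nat => i /andP [i1 _]; rewrite /ind i1; ring.
Qed.

Lemma ln_ge0 n : (1 <= n)%N -> 0 <= ln (INR n).
Proof.
move=> n1; rewrite -ln_1; apply: ln_le; first lra.
exact: (le_INR _ _ (leP n1)).
Qed.

Lemma ln_fact_le n : ln (INR n`!) <= INR n * ln (INR n).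
Proof.
rewrite -sum_ln -{1}(sum_one n) Rmult_comm sumR_scale.
rewrite big_nat_cond [X in _ <= X]big_nat_cond.
apply: sumR_le => j /andP [/andP [j1 jn] _].
rewrite Rmult_1_r; apply: ln_le.
  have h : 1 <= INR j by exact: (le_INR _ _ (leP j1)).
  lra.
by apply: le_INR; apply/leP; lia.
Qed.

Lemma sumR_term_le (F : nat -> R) i N : (forall k, 0 <= F k) -> (i < N)%N ->
  F i <= \big[Rplus/0]_(0 <= k < N) F k.
Proof.
move=> F0 iN; rewrite (@sumR_cat 0 i N) // ?(ltnW iN) //.
rewrite -(ltn_predK iN) sumR_recl; last by rewrite -ltnS (ltn_predK iN).
have h1 := @sumR_ge0 _ (index_iota 0 i) (fun _ => true) F (fun k _ => F0 k).
have h2 := @sumR_ge0 _ (index_iota i (N.-1)) (fun _ => true) (fun k => F k.+1) (fun k _ => F0 k.+1).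
lra.
Qed.

Lemma main_real (a : nat -> R) (c : R) :
  (forall eps, 0 < eps -> exists N : nat, forall n : nat, (N <= n)%N ->
     Rabs (Ar a n n - c * INR n) <= eps * INR n) ->
  forall eps, 0 < eps -> exists N : nat, forall n : nat, (N <= n)%N ->
     Rabs (Sr a n) <= eps * (INR n * ln (INR n)).
Proof.
move=> H eps eps0.
pose e := eps / 6.
have e0 : 0 < e by rewrite /e; lra.
have [N0 HN0] := H e e0.
pose E := fun m => Ar a m m - c * INR m.
pose K := \big[Rplus/0]_(0 <= m < N0) Rabs (E m).
have K0 : 0 <= K by apply: sumR_ge0 => m _; apply: Rabs_pos.
have HE : forall m, Rabs (E m) <= e * INR m + K * ind (0 < m)%N.
  move=> m; case: (posnP m) => [->|m0].
    rewrite /E /Ar big_geq // /ind /=. rewrite Rmult_0_r Rminus_0_r Rabs_R0; lra.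
  have hm := pos_INR m.
  change (ind true) with 1.
  case: (leqP N0 m) => h.
    have := HN0 m h; rewrite -/(E m); nra.
  have := @sumR_term_le (fun m => Rabs (E m)) m N0 (fun k => Rabs_pos _) h.
  rewrite -/K; nra.
have [N1 HN1] := INR_unbounded (2 * K / e).
have [N2 HN2] := INR_unbounded (exp (4 * K / e)).
exists (maxn (maxn N0 1) (maxn N1 N2)) => n hn.
have n1 : (1 <= n)%N by lia.
have nN0 : (N0 <= n)%N by lia.
have nN1 : INR N1 <= INR n by apply: le_INR; apply/leP; lia.
have nN2 : INR N2 <= INR n by apply: le_INR; apply/leP; lia.
have lnn := ln_ge0 _ n1.
have hn0 : 1 <= INR n by exact: (le_INR _ _ (leP n1)).
have Id := identity (fun k => a k - (if k == 1%N then c else 0)) n.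
rewrite Sr_shift in Id.
rewrite (@Ar_shift a c n n) // -/(E n) in Id.
rewrite (@eq_big_nat _ _ _ 1 n _ (fun i => dl i * E i)) in Id; last first.
  by move=> i /andP [_ hi]; rewrite Ar_shift //; lia.
have e3 : \big[Rplus/0]_(0 <= p < n.+1 | prime p) \big[Rplus/0]_(1 <= t < n.+1)
    (ln (INR p) * Ar (fun k => a k - (if k == 1%N then c else 0)) n (n %/ p ^ t)) =
  \big[Rplus/0]_(0 <= p < n.+1 | prime p) \big[Rplus/0]_(1 <= t < n.+1)
    (ln (INR p) * E (n %/ p ^ t)).
  apply: eq_bigr => p _; apply: eq_bigr => t _; rewrite Ar_shift //; exact: leq_div.
rewrite e3 in Id.
rewrite Id.
have B1 : Rabs (ln (INR n) * E n) <= ln (INR n) * (e * INR n + K).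
  rewrite Rabs_mult Rabs_pos_eq //; apply: Rmult_le_compat_l => //.
  have := HE n; rewrite /ind n1 /=; lra.
have B2 : Rabs (\big[Rplus/0]_(1 <= i < n) (dl i * E i)) <= (e * INR n + K) * ln (INR n).
  apply: Rle_trans (sumR_abs _ _ _) _.
  rewrite -(sum_dl _ n1) sumR_scale big_nat_cond [X in _ <= X]big_nat_cond.
  apply: sumR_le => i /andP [/andP [i1 ilt] _].
  have d0 := dl_ge0 _ i1.
  rewrite Rabs_mult (Rabs_pos_eq (dl i)) //.
  have hi : INR i <= INR n by apply: le_INR; apply/leP; lia.
  have hind : ind (0 < i)%N <= 1 by rewrite /ind; case: ifP => _; lra.
  have := HE i.
  move=> h; rewrite Rmult_comm; apply: Rmult_le_compat_r => //; nra.
have B3 : Rabs (\big[Rplus/0]_(0 <= p < n.+1 | prime p) \big[Rplus/0]_(1 <= t < n.+1)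
            (ln (INR p) * E (n %/ p ^ t))) <= e * (INR n * ln (INR n)) + K * (4 * INR n).
  apply: Rle_trans (sumR_abs _ _ _) _.
  apply: Rle_trans (_ : _ <= \big[Rplus/0]_(0 <= p < n.+1 | prime p)
     \big[Rplus/0]_(1 <= t < n.+1) (e * (ln (INR p) * INR (n %/ p ^ t))
                                    + K * (ln (INR p) * ind (0 < n %/ p ^ t)%N))) _.
    apply: sumR_le => p pp; apply: Rle_trans (sumR_abs _ _ _) _.
    apply: sumR_le => t _.
    have lp := ln_prime_ge0 _ pp.
    rewrite Rabs_mult Rabs_pos_eq //.
    have := HE (n %/ p ^ t); move: (ind _) => b h; nra.
  under eq_bigr do rewrite sumR_add -(sumR_scale _ _ e) -(sumR_scale _ _ K).
  rewrite sumR_add -(sumR_scale _ _ e) -(sumR_scale _ _ K).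
  rewrite -(@ln_fact_legendre n n n) //.
  have := ln_fact_le n.
  have := @psi_bound n n (leqnn n); rewrite /psi => hp hl.
  apply: Rplus_le_compat; [exact: Rmult_le_compat_l (Rlt_le _ _ e0) hl | exact: Rmult_le_compat_l K0 hp].
have l1 : 2 * K <= e * INR n.
  have : 2 * K / e * e = 2 * K by field; lra.
  nra.
have l2 : 4 * K <= e * ln (INR n).
  have : exp (4 * K / e) <= INR n by lra.
  move=> h; have : ln (exp (4 * K / e)) <= ln (INR n) by apply: ln_le => //; apply: exp_pos.
  rewrite ln_exp => h'.
  have : 4 * K / e * e = 4 * K by field; lra.
  nra.
have := Rabs_triang (ln (INR n) * E n - \big[Rplus/0]_(1 <= i < n) (dl i * E i))
  (- \big[Rplus/0]_(0 <= p < n.+1 | prime p) \big[Rplus/0]_(1 <= t < n.+1)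
            (ln (INR p) * E (n %/ p ^ t))).
have := Rabs_triang (ln (INR n) * E n) (- \big[Rplus/0]_(1 <= i < n) (dl i * E i)).
rewrite !Rabs_Ropp.
move: (ln (INR n) * E n) (\big[Rplus/0]_(1 <= i < n) (dl i * E i))
  (\big[Rplus/0]_(0 <= p < n.+1 | prime p) \big[Rplus/0]_(1 <= t < n.+1)
            (ln (INR p) * E (n %/ p ^ t))) B1 B2 B3 => X Y Z b1 b2 b3 t1 t2.
have h1 : INR n * (4 * K) <= INR n * (e * ln (INR n)) by nra.
have h2 : ln (INR n) * (2 * K) <= ln (INR n) * (e * INR n) by nra.
have hW : 0 <= e * (INR n * ln (INR n)) by nra.
have ee : eps = 6 * e by rewrite /e; field.
rewrite ee.
have q1 : ln (INR n) * (e * INR n + K) = e * (INR n * ln (INR n)) + ln (INR n) * K by ring.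
have q2 : (e * INR n + K) * ln (INR n) = e * (INR n * ln (INR n)) + ln (INR n) * K by ring.
have q3 : INR n * (e * ln (INR n)) = e * (INR n * ln (INR n)) by ring.
have q4 : ln (INR n) * (e * INR n) = e * (INR n * ln (INR n)) by ring.
rewrite q1 in b1; rewrite q2 in b2; rewrite q3 in h1; rewrite q4 in h2.
rewrite (_ : ln (INR n) * (2 * K) = 2 * (ln (INR n) * K)) in h2; last ring.
rewrite (_ : INR n * (4 * K) = 4 * (INR n * K)) in h1; last ring.
rewrite (_ : K * (4 * INR n) = 4 * (INR n * K)) in b3; last ring.
rewrite Rmult_assoc.
rewrite /Rminus in t1 t2 *.
move: (e * (INR n * ln (INR n))) hW b1 b2 b3 h1 h2 => W *.
move: (ln (INR n) * K) (INR n * K) => L M *.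
lra.
Qed.

Lemma sum_re (f : nat -> C) n :
  Re (sum_n_m f 1 n) = \big[Rplus/0]_(1 <= k < n.+1) Re (f k).
Proof.
elim: n => [|n IH].
  by rewrite sum_n_m_zero ?big_geq //; apply/ltP.
rewrite sum_n_Sm; last by apply/leP.
rewrite sumR_recr // -IH.
by [].
Qed.

Lemma sum_im (f : nat -> C) n :
  Im (sum_n_m f 1 n) = \big[Rplus/0]_(1 <= k < n.+1) Im (f k).
Proof.
elim: n => [|n IH].
  by rewrite sum_n_m_zero ?big_geq //; apply/ltP.
rewrite sum_n_Sm; last by apply/leP.
rewrite sumR_recr // -IH.
by [].
Qed.

Lemma Cmod_le_sum z : Cmod z <= Rabs (Re z) + Rabs (Im z).
Proof.
rewrite /Cmod.
rewrite -(sqrt_Rsqr (Rabs (Re z) + Rabs (Im z))); last first.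
  have := Rabs_pos (Re z); have := Rabs_pos (Im z); lra.
apply: sqrt_le_1_alt.
rewrite /Rsqr.
have h1 := pow2_abs (Re z); have h2 := pow2_abs (Im z).
have := Rabs_pos (Re z); have := Rabs_pos (Im z).
rewrite /Re /Im in h1 h2 *.
simpl in h1, h2 |- *; nra.
Qed.

Lemma Re_Asum a n : Re (Asum a n) = Ar (fun k => Re (a k)) n n.
Proof.
rewrite /Asum sum_re /Ar; apply: eq_bigr => k _.
rewrite natdivE /Re /Im /=; ring.
Qed.

Lemma Im_Asum a n : Im (Asum a n) = Ar (fun k => Im (a k)) n n.
Proof.
rewrite /Asum sum_im /Ar; apply: eq_bigr => k _.
rewrite natdivE /Re /Im /=; ring.
Qed.

Lemma Re_Ssum a n : Re (Ssum a n) = Sr (fun k => Re (a k)) n.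
Proof.
rewrite /Ssum sum_re /Sr; apply: eq_bigr => k _.
rewrite natdivE /Re /Im /=; ring.
Qed.

Lemma Im_Ssum a n : Im (Ssum a n) = Sr (fun k => Im (a k)) n.
Proof.
rewrite /Ssum sum_im /Sr; apply: eq_bigr => k _.
rewrite natdivE /Re /Im /=; ring.
Qed.

Lemma im_le_Cmod z : Rabs (Im z) <= Cmod z.
Proof. apply: Rle_trans (Rmax_Cmod z); exact: Rmax_r. Qed.

Theorem lemma4 (a : nat -> C) (c : C) :
  (forall eps : R, 0 < eps -> exists N : nat, forall n : nat, (N <= n)%coq_nat ->
     Cmod (Cminus (Asum a n) (Cmult c (RtoC (INR n)))) <= eps * INR n) ->
  forall eps : R, 0 < eps -> exists N : nat, forall n : nat, (N <= n)%coq_nat ->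
     Cmod (Ssum a n) <= eps * (INR n * ln (INR n)).
Proof.
move=> H eps eps0.
have Hr : forall eps, 0 < eps -> exists N : nat, forall n : nat, (N <= n)%N ->
     Rabs (Ar (fun k => Re (a k)) n n - Re c * INR n) <= eps * INR n.
  move=> e e0; have [N HN] := H e e0; exists N => n /leP hn.
  apply: Rle_trans (HN n hn); apply: Rle_trans (re_le_Cmod _).
  rewrite -Re_Asum; apply: Req_le; congr Rabs; rewrite /Re /Im /=; ring.
have Hi : forall eps, 0 < eps -> exists N : nat, forall n : nat, (N <= n)%N ->
     Rabs (Ar (fun k => Im (a k)) n n - Im c * INR n) <= eps * INR n.
  move=> e e0; have [N HN] := H e e0; exists N => n /leP hn.
  apply: Rle_trans (HN n hn); apply: Rle_trans (im_le_Cmod _).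
  rewrite -Im_Asum; apply: Req_le; congr Rabs; rewrite /Re /Im /=; ring.
have e2 : 0 < eps / 2 by lra.
have [N1 HN1] := @main_real _ _ Hr _ e2.
have [N2 HN2] := @main_real _ _ Hi _ e2.
exists (maxn N1 N2) => n /leP hn.
apply: Rle_trans (Cmod_le_sum _) _.
rewrite Re_Ssum Im_Ssum.
have h1 := HN1 n (leq_trans (leq_maxl _ _) hn).
have h2 := HN2 n (leq_trans (leq_maxr _ _) hn).
lra.
Qed.
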